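(* Let $n,m\ge 1$, $X=\{x_1,\dots,x_m\}$, and for each $1\le i\le n$ let $A_i,B_i$ be nonempty subsets of $X$ with $A_i\cap B_i=\emptyset$. Let $\Sigma=\{A_i\rightarrow B_i:1\le i\le n\}$, a set of implications on $X$. Let $Y=\{y_1,\dots,y_n\}$ be a set disjoint from $X$, and let $\Sigma'$ be the set of implications on $X\cup Y$ consisting of $(A_i\cup (Y\setminus\{y_i\}))\rightarrow B_i$ for $1\le i\le n$, together with $Y\rightarrow X$. Then every optimum basis of the closure system on $X\cup Y$ associated with $\Sigma'$ is of the form $\{(A_i\cup(Y\setminus\{y_i\}))\rightarrow B_i: 1\le i\le n\}\cup\{Y\rightarrow S\}$, where $S$ is a minimum cardinality generator of the closure system on $X$ associated with $\Sigma$.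
   Context: An implication on a set $Z$ is a pair $A\rightarrow B$ with $A,B\subseteq Z$, $B\ne\emptyset$. For a set $\Sigma$ of implications on $Z$, the associated closure system $\langle Z,\phi\rangle$ has as closed sets exactly the $S\subseteq Z$ such that $A\subseteq S$ implies $B\subseteq S$ for every $(A\rightarrow B)\in\Sigma$, and $\phi(A)$ is the intersection of closed sets containing $A$. A set of implications is an implication basis of a closure system if its associated closure system has the same closed sets. The size of a set of implications $\{A_k\rightarrow B_k\}$ is $\sum_k(|A_k|+|B_k|)$; an optimum basis of a finite closure system is an implication basis of minimum size among all its implication bases. A generator of a closure system $\langle X,\phi\rangle$ is a set $S\subseteq X$ with $\phi(S)=X$; a minimum cardinality generator is a generator of least cardinality. *)

(* Defs.v *)
From mathcomp Require Import all_boot.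
Set Implicit Arguments. Unset Strict Implicit. Unset Printing Implicit Defensive.

(* An implication A -> B on a finite set T is a pair (A, B); a set of
   implications is a finite set of such pairs. *)
Section Impl.
Variable T : finType.

Definition implication_set (Sig : {set {set T} * {set T}}) : bool :=
  [forall p in Sig, p.2 != set0].

Definition closedb (Sig : {set {set T} * {set T}}) (S : {set T}) : bool :=
  [forall p in Sig, (p.1 \subset S) ==> (p.2 \subset S)].

Definition closure (Sig : {set {set T} * {set T}}) (S : {set T}) : {set T} :=
  \bigcap_(C | closedb Sig C && (S \subset C)) C.

Definition is_basis (Sig Gam : {set {set T} * {set T}}) : Prop :=
  implication_set Gam /\ forall C : {set T}, closedb Gam C = closedb Sig C.

Definition impl_size (Gam : {set {set T} * {set T}}) : nat :=
  \sum_(p in Gam) (#|p.1| + #|p.2|).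

Definition optimum_basis (Sig Gam : {set {set T} * {set T}}) : Prop :=
  is_basis Sig Gam /\
  forall Gam', is_basis Sig Gam' -> impl_size Gam <= impl_size Gam'.

Definition generator (Sig : {set {set T} * {set T}}) (S : {set T}) : Prop :=
  closure Sig S = setT.

Definition min_generator (Sig : {set {set T} * {set T}}) (S : {set T}) : Prop :=
  generator Sig S /\ forall S', generator Sig S' -> #|S| <= #|S'|.
End Impl.

(* X = 'I_m, Y = 'I_n, X u Y represented as the disjoint sum 'I_m + 'I_n *)
Definition liftX (m n : nat) (S : {set 'I_m}) : {set 'I_m + 'I_n} :=
  [set inl x | x in S].
Definition liftY (m n : nat) (S : {set 'I_n}) : {set 'I_m + 'I_n} :=
  [set inr y | y in S].

Definition Sigma (n m : nat) (A B : 'I_n -> {set 'I_m}) : {set {set 'I_m} * {set 'I_m}} :=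
  [set (A i, B i) | i : 'I_n].

Definition Sigma'_main (n m : nat) (A B : 'I_n -> {set 'I_m})
  : {set {set 'I_m + 'I_n} * {set 'I_m + 'I_n}} :=
  [set (liftX n (A i) :|: liftY m [set~ i], liftX n (B i)) | i : 'I_n].

Definition Sigma' (n m : nat) (A B : 'I_n -> {set 'I_m})
  : {set {set 'I_m + 'I_n} * {set 'I_m + 'I_n}} :=
  Sigma'_main A B :|: [set (liftY m setT, liftX n setT)].

(* Main.v *)
Require Import Defs.
From mathcomp Require Import all_boot.
From mathcomp Require Import zify.
Set Implicit Arguments. Unset Strict Implicit. Unset Printing Implicit Defensive.

Section Gen.
Variable T : finType.
Implicit Types (G H : {set {set T} * {set T}}) (S C : {set T}).

Lemma closedP G C :
  reflect (forall p, p \in G -> p.1 \subset C -> p.2 \subset C) (closedb G C).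
Proof.
apply: (iffP forallP) => H p.
  by move=> pG; move: (H p); rewrite pG /= => /implyP.
by apply/implyP => pG; apply/implyP; apply: H.
Qed.

Lemma closure_sub G S : S \subset Defs.closure G S.
Proof. by apply/bigcapsP => C /andP[]. Qed.

Lemma closure_min G S C : closedb G C -> S \subset C -> Defs.closure G S \subset C.
Proof. by move=> h1 h2; rewrite /Defs.closure; apply: bigcap_inf; rewrite h1 h2. Qed.

Lemma closure_closed G S : closedb G (Defs.closure G S).
Proof.
apply/closedP => p pG h; apply/bigcapsP => C /andP[cC sC].
apply: (closedP _ _ cC _ pG); apply: subset_trans h _.
by apply: bigcap_inf; rewrite cC sC.
Qed.

Lemma size_setU1 G r : r \notin G ->
  impl_size (r |: G) = #|r.1| + #|r.2| + impl_size G.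
Proof. by move=> h; rewrite /impl_size big_setU1. Qed.

Lemma size_split G H : H \subset G ->
  impl_size G = impl_size (G :\: H) + impl_size H.
Proof.
move=> h; rewrite /impl_size (big_setID H) addnC.
by rewrite (setIidPr h).
Qed.

Lemma card_bigcup_le (I : finType) (P : {set I}) (F : I -> {set T}) :
  #|\bigcup_(i in P) F i| <= \sum_(i in P) #|F i|.
Proof.
elim/big_rec2: _ => [|i x y _ Hxy]; first by rewrite cards0.
apply: leq_trans (leq_card_setU _ _) _; by rewrite leq_add2l.
Qed.

End Gen.

Section Main.
Variables (n m : nat) (A B : 'I_n -> {set 'I_m}).
Hypotheses (n1 : 1 <= n) (m1 : 1 <= m) (A0 : forall i, A i != set0)
  (B0 : forall i, B i != set0) (AB : forall i, [disjoint A i & B i]).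

Local Notation T := ('I_m + 'I_n)%type.
Local Notation LX := (liftX n).
Local Notation LY := (liftY m).
Local Notation Sg := (Sigma' A B).

Definition Ci i := LX (A i) :|: LY [set~ i].
Definition Yall := LY [set: 'I_n].
Definition Xall := LX [set: 'I_m].

Lemma inlX (x : 'I_m) (S : {set 'I_m}) : (inl x \in LX S) = (x \in S).
Proof. by rewrite /liftX mem_imset // => ? ? []. Qed.
Lemma inrX (y : 'I_n) (S : {set 'I_m}) : (inr y \in LX S) = false.
Proof. by apply/negbTE/imsetP => -[]. Qed.
Lemma inrY (y : 'I_n) (S : {set 'I_n}) : (inr y \in LY S) = (y \in S).
Proof. by rewrite /liftY mem_imset // => ? ? []. Qed.
Lemma inlY (x : 'I_m) (S : {set 'I_n}) : (inl x \in LY S) = false.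
Proof. by apply/negbTE/imsetP => -[]. Qed.
Definition memT := (inlX, inrX, inlY, inrY).

Lemma closedS' (C : {set T}) : closedb Sg C =
  [forall i, (Ci i \subset C) ==> (LX (B i) \subset C)] &&
  ((Yall \subset C) ==> (Xall \subset C)).
Proof.
apply/closedP/andP => [H|[/forallP H1 /implyP H2] p].
  split; last first.
    by apply/implyP; apply: (H (Yall, Xall)); rewrite /Sigma' !inE eqxx orbT.
  apply/forallP => i; apply/implyP; apply: (H (Ci i, LX (B i))).
  by rewrite /Sigma' inE; apply/orP; left; apply/imsetP; exists i.
rewrite /Sigma' inE => /orP[/imsetP[i _ ->]|]; last by rewrite inE => /eqP ->.
by move: (H1 i) => /implyP.
Qed.

Lemma Sg_main i : (Ci i, LX (B i)) \in Sg.
Proof. by rewrite /Sigma' inE; apply/orP; left; apply/imsetP; exists i. Qed.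

Lemma closed2 (C : {set T}) i j : i != j -> inr i \notin C -> inr j \notin C -> closedb Sg C.
Proof.
move=> ij ni nj; rewrite closedS'; apply/andP; split.
  apply/forallP => k; apply/implyP => /subsetP h; exfalso.
  case: (eqVneq k i) h => [->|ki] h.
    by move: (h (inr j)); rewrite /Ci !inE !memT !inE eq_sym ij /= => /(_ isT); apply/negP.
  by move: (h (inr i)); rewrite /Ci !inE !memT !inE eq_sym ki /= => /(_ isT); apply/negP.
apply/implyP => /subsetP h; exfalso.
by move: (h (inr i)); rewrite !memT inE => /(_ isT); apply/negP.
Qed.

Lemma closed3 (C : {set T}) i : inr i \notin C -> LY [set~ i] \subset C ->
  (LX (A i) \subset C -> LX (B i) \subset C) -> closedb Sg C.
Proof.
move=> ni hs hA; rewrite closedS'; apply/andP; split.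
  apply/forallP => k; apply/implyP => h.
  case: (eqVneq k i) h => [->|ki] h.
    by apply: hA; apply: subset_trans h; rewrite /Ci subsetUl.
  exfalso; move/subsetP: h => /(_ (inr i)); rewrite /Ci !inE !memT !inE eq_sym ki /=.
  by move=> /(_ isT); apply/negP.
apply/implyP => /subsetP h; exfalso.
by move: (h (inr i)); rewrite !memT inE => /(_ isT); apply/negP.
Qed.

Lemma type_eq (C : {set T}) (i j : 'I_n) : LY [set~ j] \subset C -> inr i \notin C -> j = i.
Proof.
move=> /subsetP h ni; apply/eqP; apply/negPn/negP => ne.
by move: (h (inr i)); rewrite !memT !inE eq_sym ne => /(_ isT); apply/negP.
Qed.


Variable Gam : {set {set T} * {set T}}.
Hypothesis opt : optimum_basis Sg Gam.

Definition w (p : {set T} * {set T}) := #|p.1| + #|p.2|.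

Lemma G2 p : p \in Gam -> p.2 != set0.
Proof. by case: opt => [[/forallP h _] _] pG; move: (h p); rewrite pG. Qed.

Lemma clG C : closedb Gam C = closedb Sg C.
Proof. by case: opt => [[_ h] _]. Qed.

Lemma usecl C p : closedb Sg C -> p \in Gam -> p.1 \subset C -> p.2 \subset C.
Proof. by rewrite -clG => /closedP; apply. Qed.

Lemma violate C : ~~ closedb Sg C ->
  exists2 p, p \in Gam & (p.1 \subset C) && ~~ (p.2 \subset C).
Proof.
rewrite -clG /closedb negb_forall_in => /exists_inP [p pG].
by rewrite negb_imply => h; exists p.
Qed.

Lemma optle G : is_basis Sg G -> impl_size Gam <= impl_size G.
Proof. by case: opt => _; apply. Qed.

Lemma nontriv p : p \in Gam -> ~~ (p.2 \subset p.1).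
Proof.
move=> pG; apply/negP => h.
have bas : is_basis Sg (Gam :\ p).
  split.
    apply/forallP => q; apply/implyP; rewrite !inE => /andP[_ qG]; exact: G2.
  move=> C; rewrite -clG; apply/closedP/closedP => H q qG.
    case: (eqVneq q p) => [->|ne]; first by move=> s; apply: subset_trans h s.
    by apply: H; rewrite !inE ne.
  by apply: H; move: qG; rewrite !inE => /andP[].
move: (optle bas); rewrite /impl_size (big_setD1 _ pG) /=.
have : 0 < #|p.2| by rewrite card_gt0 G2.
move=> h2; rewrite -{2}[\sum_(_ in _) _]add0n leq_add2r leqn0 addn_eq0 => /andP[_]; by rewrite cards_eq0 (negbTE (G2 pG)).
Qed.


Lemma classify p : p \in Gam -> (Yall \subset p.1) \/
  exists i, [/\ inr i \notin p.1, LY [set~ i] \subset p.1, Ci i \subset p.1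
              & p.2 \subset p.1 :|: LX (B i)].
Proof.
move=> pG; case: (boolP (Yall \subset p.1)) => hY; [by left|right].
have [i ip] : exists i, inr i \notin p.1.
  move: hY => /subsetPn [z /imsetP [i _ ->] zp]; by exists i.
have hs : LY [set~ i] \subset p.1.
  apply/subsetP => z /imsetP [j]; rewrite !inE => ji ->.
  apply/negPn/negP => jp.
  by move: (nontriv pG); rewrite (usecl (closed2 ji jp ip) pG (subxx _)).
have hA : LX (A i) \subset p.1.
  apply/negPn/negP => nA.
  have cl : closedb Sg p.1 by apply: (closed3 ip hs) => h; rewrite h in nA.
  by move: (nontriv pG); rewrite (usecl cl pG (subxx _)).
exists i; split => //; first by rewrite /Ci subUset hA hs.
apply: (usecl _ pG (subsetUl _ _)); apply: (closed3 (i := i)).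
- by rewrite !inE !memT orbF.
- by apply: subset_trans hs (subsetUl _ _).
- by move=> _; apply: subsetUr.
Qed.


Lemma notcl (C : {set T}) i : Ci i \subset C -> ~~ (LX (B i) \subset C) ->
  ~~ closedb Sg C.
Proof.
move=> h1 h2; rewrite closedS' negb_and; apply/orP; left.
by rewrite negb_forall; apply/existsP; exists i; rewrite negb_imply h1.
Qed.

Definition Gi i := [set p in Gam | (inr i \notin p.1) && (LY [set~ i] \subset p.1)].

Lemma Gi_prop i p : p \in Gi i -> Ci i \subset p.1 /\ p.2 \subset p.1 :|: LX (B i).
Proof.
rewrite inE => /andP [pG /andP [ni hs]].
case: (classify pG) => [hY|[j [nj hj hC h2]]].
  by move/subsetP: hY => /(_ (inr i)); rewrite !memT inE => /(_ isT) h; rewrite h in ni.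
by have ji := type_eq hj ni; subst j.
Qed.

Lemma Ci_in i : (inr i \notin Ci i) && (LY [set~ i] \subset Ci i).
Proof. by rewrite /Ci !inE !memT !inE eqxx subsetUr. Qed.

Lemma p0_ex i : exists2 p0, p0 \in Gi i & p0.1 = Ci i.
Proof.
have ncl : ~~ closedb Sg (Ci i).
  apply: (notcl (subxx _)); apply/subsetPn.
  have /set0Pn [b bB] := B0 i.
  exists (inl b); first by rewrite !memT.
  rewrite /Ci !inE !memT orbF; apply/negP => bA.
  by rewrite (disjointFl (AB i) bB) in bA.
have [p pG /andP [s _]] := violate ncl.
case/andP: (Ci_in i) => ni hs.
case: (classify pG) => [hY|[j [nj hj hC h2]]].
  by move/subsetP: (subset_trans hY s) => /(_ (inr i)); rewrite !memT inE => /(_ isT) h; rewrite h in ni.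
have ji := type_eq (subset_trans hj s) ni; subst j.
have e : p.1 = Ci i by apply/eqP; rewrite eqEsubset s hC.
by exists p => //; rewrite inE pG e Ci_in.
Qed.

Lemma cover i b : b \in B i -> exists2 p, p \in Gi i & inl b \in p.2.
Proof.
move=> bB; set D := Ci i :|: LX (B i :\ b).
have nbD : inl b \notin D.
  rewrite /D /Ci !inE !memT !inE eqxx orbF /=; apply/negP => bA.
  by rewrite (disjointFl (AB i) bB) in bA.
have ncl : ~~ closedb Sg D.
  apply: (notcl (subsetUl _ _)); apply/subsetPn; exists (inl b) => //.
  by rewrite !memT.
have [p pG /andP [s ns]] := violate ncl.
have niD : inr i \notin D by rewrite /D /Ci !inE !memT !inE eqxx.
case: (classify pG) => [hY|[j [nj hj hC h2]]].
  by move/subsetP: (subset_trans hY s) => /(_ (inr i)); rewrite !memT inE => /(_ isT) h; rewrite h in niD.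
have ji := type_eq (subset_trans hj s) niD; subst j.
exists p; first by rewrite inE pG nj hj.
move/subsetPn: ns => [z z2 zD].
move/subsetP: h2 => /(_ z z2); rewrite inE => /orP [z1|].
  by move/subsetP: s => /(_ z z1) h; rewrite h in zD.
case/imsetP => b' b'B ez; subst z.
case: (eqVneq b' b) => [<- //| ne].
by move: zD; rewrite /D !inE !memT !inE ne b'B orbT.
Qed.


Lemma Gi_sub i : Gi i \subset Gam.
Proof. by apply/subsetP => p; rewrite inE => /andP[]. Qed.

Lemma Gi_eq i : Gi i = [set (Ci i, LX (B i))].
Proof.
set r := (Ci i, LX (B i)).
have rN : r \notin Gam :\: Gi i.
  rewrite !inE; apply/negP => /andP [nG rG]; move: nG.
  by rewrite rG /= !memT !inE eqxx subsetUr.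
have bas : is_basis Sg ((Gam :\: Gi i) :|: [set r]).
  split.
    apply/forallP => q; apply/implyP; rewrite !inE => /orP [/andP[_ qG]|/eqP ->].
      exact: G2.
    by have /set0Pn [b bB] := B0 i; apply/set0Pn; exists (inl b); rewrite /= !memT.
  move=> C; apply/idP/idP => h.
    rewrite -clG; apply/closedP => q qG.
    case: (boolP (q \in Gi i)) => qi.
      have [c1 c2] := Gi_prop qi => s.
      have hB : LX (B i) \subset C.
        by apply: (closedP _ _ h r); [rewrite !inE eqxx orbT | exact: subset_trans c1 s].
      by apply: subset_trans c2 _; rewrite subUset s hB.
    by apply: (closedP _ _ h); rewrite in_setU in_setD qi qG.
  apply/closedP => q; rewrite !inE => /orP [/andP [_ qG]|/eqP ->].
    exact: usecl h qG.
  exact: (closedP _ _ h _ (Sg_main i)).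
have le := optle bas.
rewrite setUC size_setU1 // (size_split (Gi_sub i)) in le.
have le' : impl_size (Gi i) <= #|Ci i| + #|LX (B i)| by move: le => /=; lia.
have [p0 p0i e0] := p0_ex i.
have s1 : #|Ci i| + #|Gi i :\ p0| <= \sum_(p in Gi i) #|p.1|.
  rewrite (big_setD1 _ p0i) /= e0 leq_add2l -sum1_card; apply: leq_sum => p.
  rewrite in_setD1 => /andP [_ pi].
  have [c1 _] := Gi_prop pi.
  have /set0Pn [a aA] := A0 i.
  rewrite card_gt0; apply/set0Pn; exists (inl a); apply: (subsetP c1).
  by rewrite /Ci inE !memT aA.
have s2 : #|LX (B i)| <= \sum_(p in Gi i) #|p.2|.
  apply: leq_trans (card_bigcup_le _ (fun p => p.2)).
  apply: subset_leq_card; apply/subsetP => z /imsetP [b bB ->].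
  have [p pi bp] := cover bB; apply/bigcupP; by exists p.
have sp : impl_size (Gi i) = \sum_(p in Gi i) #|p.1| + \sum_(p in Gi i) #|p.2|.
  by rewrite /impl_size big_split.
have c0 : #|Gi i :\ p0| = 0 by lia.
have eG : Gi i = [set p0].
  apply/eqP; rewrite eqEsubset sub1set p0i andbT; apply/subsetP => p pi.
  rewrite inE; apply/negPn/negP => ne.
  have : p \in Gi i :\ p0 by rewrite in_setD1 ne pi.
  by rewrite (cards0_eq c0) inE.
rewrite eG; congr [set _].
have cov : LX (B i) \subset p0.2.
  apply/subsetP => z /imsetP [b bB ->].
  have [p pi bp] := cover bB; move: pi; rewrite eG inE => /eqP <- //.
have le2 : #|p0.2| <= #|LX (B i)|.
  move: le'; rewrite eG /impl_size big_set1 e0; lia.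
have e2 : p0.2 = LX (B i) by apply/eqP; rewrite eq_sym eqEcard cov le2.
by move: e0 e2; case: p0 {p0i eG cov le2 s1 c0} => a b /= -> ->.
Qed.


Definition GY := [set p in Gam | Yall \subset p.1].
Definition inlpre (S : {set T}) : {set 'I_m} := [set x | inl x \in S].
Definition inrpre (S : {set T}) : {set 'I_n} := [set y | inr y \in S].

Lemma card_split (S : {set T}) : #|S| = #|inlpre S| + #|inrpre S|.
Proof.
have e : S = LX (inlpre S) :|: LY (inrpre S).
  by apply/setP => -[x|y]; rewrite !inE !memT !inE ?orbF.
have d : LX (inlpre S) :&: LY (inrpre S) = set0.
  by apply/setP => -[x|y]; rewrite !inE !memT ?andbF.
rewrite {1}e cardsU d cards0 subn0 !card_imset //; by move=> ? ? [].
Qed.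

Definition U := \bigcup_(q in GY) (inlpre q.1 :|: inlpre q.2).

Lemma GY_sub : GY \subset Gam.
Proof. by apply/subsetP => p; rewrite inE => /andP[]. Qed.

Lemma q0_ex : exists2 q0, q0 \in GY & q0.1 = Yall.
Proof.
have nX : ~~ (Xall \subset Yall).
  by apply/subsetPn; exists (inl (Ordinal m1)); rewrite !memT ?inE.
have ncl : ~~ closedb Sg Yall by rewrite closedS' subxx /= (negbTE nX) andbF.
have [q qG /andP[s ns]] := violate ncl.
case: (classify qG) => [hY|[j [nj hj hC h2]]].
  by exists q; [rewrite inE qG hY | apply/eqP; rewrite eqEsubset s hY].
have /set0Pn [a aA] := A0 j.
move/subsetP: (subset_trans hC s) => /(_ (inl a)).
by rewrite /Ci inE !memT aA => /(_ isT).
Qed.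

Lemma U_ne : U != set0.
Proof.
have [q0 q0Y e0] := q0_ex.
have q0G : q0 \in Gam by move: q0Y; rewrite inE => /andP[].
move: (nontriv q0G) => /subsetPn [[x|y] z2 zn].
  apply/set0Pn; exists x; apply/bigcupP; exists q0 => //.
  by rewrite !inE z2 orbT.
by move: zn; rewrite e0 /Yall !memT inE.
Qed.

Lemma cardYall : #|Yall| = n.
Proof. by rewrite card_imset ?cardsT ?card_ord // => ? ? []. Qed.

Lemma cardLX (S : {set 'I_m}) : #|LX S| = #|S|.
Proof. by rewrite card_imset // => ? ? []. Qed.

Lemma GY_eq : GY = [set (Yall, LX U)].
Proof.
set r := (Yall, LX U).
have rN : r \notin Gam :\: GY.
  rewrite !inE; apply/negP => /andP [nG rG]; move: nG.
  by rewrite rG /= subxx.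
have bas : is_basis Sg ((Gam :\: GY) :|: [set r]).
  split.
    apply/forallP => q; apply/implyP; rewrite !inE => /orP [/andP[_ qG]|/eqP ->].
      exact: G2.
    have /set0Pn [x xU] := U_ne; apply/set0Pn; exists (inl x); by rewrite /= !memT.
  move=> C; apply/idP/idP => h.
    rewrite -clG; apply/closedP => q qG.
    case: (boolP (q \in GY)) => qY.
      move=> s; have hY : Yall \subset C.
        by apply: subset_trans s; move: (qY); rewrite inE => /andP[].
      have hU : LX U \subset C.
        by apply: (closedP _ _ h r) => //; rewrite !inE eqxx orbT.
      apply/subsetP => -[x|y] z2.
        apply: (subsetP hU); rewrite !memT; apply/bigcupP; exists q => //.
        by rewrite !inE z2 orbT.
      by apply: (subsetP hY); rewrite /Yall !memT inE.
    by apply: (closedP _ _ h); rewrite in_setU in_setD qY qG.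
  apply/closedP => q; rewrite !inE => /orP [/andP [_ qG]|/eqP ->].
    exact: usecl h qG.
  rewrite closedS' in h; move: h => /andP [_ /implyP hX] /= s.
  by apply: subset_trans (hX s); apply: imsetS; apply: subsetT.
have le := optle bas.
rewrite setUC size_setU1 // (size_split GY_sub) /= cardYall cardLX in le.
have le' : impl_size GY <= n + #|U| by move: le; lia.
have [q0 q0Y e0] := q0_ex.
have lb : forall q, q \in GY -> n + (#|inlpre q.1| + #|inlpre q.2|) <= #|q.1| + #|q.2|.
  move=> q; rewrite inE => /andP [_ hY].
  have : n <= #|inrpre q.1|.
    rewrite -[X in X <= _]card_ord -cardsT; apply: subset_leq_card.
    apply/subsetP => y _; rewrite inE; apply: (subsetP hY); by rewrite /Yall !memT inE.
  move: (card_split q.1) (card_split q.2); lia.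
have s1 : n * #|GY| + #|U| <= impl_size GY.
  have s2 : #|U| <= \sum_(q in GY) (#|inlpre q.1| + #|inlpre q.2|).
    apply: leq_trans (card_bigcup_le _ _) _; apply: leq_sum => q _.
    exact: leq_card_setU.
  apply: leq_trans (_ : \sum_(q in GY) (n + (#|inlpre q.1| + #|inlpre q.2|)) <= _).
    by rewrite big_split /= sum_nat_const mulnC leq_add2l.
  exact: leq_sum.
have c1 : #|GY| <= 1.
  have : n * #|GY| <= n * 1 by move: s1 le'; lia.
  by rewrite leq_pmul2l.
have eG : GY = [set q0].
  apply/eqP; rewrite eq_sym eqEcard sub1set q0Y cards1 //.
have hU : U = inlpre q0.2.
  rewrite /U eG big_set1; apply/setP => x; rewrite !inE e0 !memT //.
have le2 : #|q0.2| <= #|inlpre q0.2|.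
  move: le'; rewrite -hU {1}eG /impl_size big_set1 e0 cardYall; lia.
have e3 : inrpre q0.2 = set0.
  by apply: cards0_eq; move: le2 (card_split q0.2); lia.
rewrite eG; congr [set _].
have e2 : q0.2 = LX U.
  rewrite hU; apply/setP => -[x|y]; rewrite !memT ?inE //.
  apply/negbTE; have : y \notin inrpre q0.2 by rewrite e3 inE.
  by rewrite inE.
by move: e0 e2; case: q0 {q0Y eG hU le2 e3} => a b /= -> ->.
Qed.


Lemma Gam_eq : Gam = Sigma'_main A B :|: [set (Yall, LX U)].
Proof.
apply/eqP; rewrite eqEsubset; apply/andP; split.
  apply/subsetP => p pG; case: (classify pG) => [hY|[i [ni hs _ _]]].
    have : p \in GY by rewrite inE pG hY.
    by rewrite GY_eq inE => /eqP ->; rewrite !inE eqxx orbT.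
  have : p \in Gi i by rewrite inE pG ni hs.
  rewrite Gi_eq inE => /eqP ->; rewrite in_setU; apply/orP; left.
  by apply/imsetP; exists i.
apply/subsetP => p; rewrite in_setU => /orP [/imsetP [i _ ->]|].
  by apply: (subsetP (Gi_sub i)); rewrite Gi_eq; apply/set1P.
by move/set1P => ->; apply: (subsetP GY_sub); rewrite GY_eq; apply/set1P.
Qed.

Lemma Sigma_in j : (A j, B j) \in Sigma A B.
Proof. by apply/imsetP; exists j. Qed.

Lemma U_gen : generator (Sigma A B) U.
Proof.
set D := Defs.closure (Sigma A B) U.
have cD := closure_closed (Sigma A B) U.
set C := Yall :|: LX D.
have cl : closedb Gam C.
  apply/closedP => q; rewrite Gam_eq in_setU => /orP [/imsetP [j _ ->] /= s | /set1P -> /= s].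
    have hA : A j \subset D.
      apply/subsetP => a aA; have := subsetP s (inl a).
      by rewrite /C !inE /Yall !memT aA /= => /(_ isT).
    have hB := closedP _ _ cD _ (Sigma_in j) hA.
    by apply: subset_trans (subsetUr Yall _); apply: imsetS.
  by apply: subset_trans (subsetUr Yall _); apply: imsetS; apply: closure_sub.
move: cl; rewrite clG closedS' => /andP [_ /implyP hX].
move: (hX (subsetUl _ _)) => {}hX.
apply/eqP; rewrite eqEsubset subsetT /=; apply/subsetP => x _.
have := subsetP hX (inl x); rewrite /Xall /C !inE /Yall !memT inE /=.
by move=> /(_ isT).
Qed.

Lemma gen_ne S : generator (Sigma A B) S -> S != set0.
Proof.
move=> g; apply/negP => /eqP S0.
have c0 : closedb (Sigma A B) set0.
  apply/closedP => p /imsetP [j _ ->] /= s.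
  have /set0Pn [a aA] := A0 j.
  by move: (subsetP s a aA); rewrite inE.
have := closure_min c0 (sub0set _); rewrite -S0 g.
move=> /subsetP /(_ (Ordinal m1)); rewrite S0 !inE.
by move=> /(_ isT).
Qed.

Lemma basis_gen S : generator (Sigma A B) S ->
  is_basis Sg (Sigma'_main A B :|: [set (Yall, LX S)]).
Proof.
move=> g; split.
  apply/forallP => q; apply/implyP; rewrite in_setU => /orP [/imsetP [j _ ->]|/set1P ->] /=.
    by have /set0Pn [b bB] := B0 j; apply/set0Pn; exists (inl b); rewrite !memT.
  by have /set0Pn [x xS] := gen_ne g; apply/set0Pn; exists (inl x); rewrite !memT.
move=> C; apply/idP/idP => h.
  rewrite closedS'; apply/andP; split.
    apply/forallP => i; apply/implyP; apply: (closedP _ _ h (Ci i, LX (B i))).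
    by rewrite in_setU; apply/orP; left; apply/imsetP; exists i.
  apply/implyP => hY.
  have hS : LX S \subset C.
    by apply: (closedP _ _ h (Yall, LX S)) => //; rewrite in_setU set11 orbT.
  have cD : closedb (Sigma A B) (inlpre C).
    apply/closedP => p /imsetP [j _ ->] /= sA.
    have hC : Ci j \subset C.
      rewrite /Ci subUset; apply/andP; split.
        apply/subsetP => z /imsetP [a aA ->]; by move: (subsetP sA a aA); rewrite inE.
      apply: subset_trans hY; apply: imsetS; apply: subsetT.
    have := closedP _ _ h (Ci j, LX (B j)).
    rewrite in_setU (_ : _ \in Sigma'_main A B) /=; last by apply/imsetP; exists j.
    move=> /(_ isT hC) hB; apply/subsetP => b bB; rewrite inE.
    by apply: (subsetP hB); rewrite !memT.
  have sD : S \subset inlpre C.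
    by apply/subsetP => x xS; rewrite inE; apply: (subsetP hS); rewrite !memT.
  have := closure_min cD sD; rewrite g => hT.
  apply/subsetP => z /imsetP [x _ ->].
  by have := subsetP hT x; rewrite !inE => /(_ isT).
apply/closedP => q; rewrite in_setU => /orP[ /imsetP [j _ ->] | /set1P ->] /= s.
  exact: (closedP _ _ h _ (Sg_main j)).
rewrite closedS' in h; move: h => /andP [_ /implyP hX].
by apply: subset_trans (hX s); apply: imsetS; apply: subsetT.
Qed.

Lemma size_form S : impl_size (Sigma'_main A B :|: [set (Yall, LX S)]) =
  n + #|S| + impl_size (Sigma'_main A B).
Proof.
rewrite setUC size_setU1 /= ?cardYall ?cardLX //.
apply/negP => /imsetP [i _ [e _]].
have /set0Pn [a aA] := A0 i.
have : inl a \in Yall by rewrite e !inE !memT aA.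
by rewrite /Yall !memT.
Qed.

Lemma main_result : exists S : {set 'I_m},
  min_generator (Sigma A B) S /\
  Gam = Sigma'_main A B :|: [set (liftY m setT, liftX n S)].
Proof.
exists U; split; last exact: Gam_eq.
split; first exact: U_gen.
move=> S' g; have := optle (basis_gen g).
by rewrite {1}Gam_eq !size_form leq_add2r leq_add2l.
Qed.

End Main.

Theorem claim2 (n m : nat) (A B : 'I_n -> {set 'I_m}) :
  1 <= n -> 1 <= m ->
  (forall i, A i != set0) -> (forall i, B i != set0) ->
  (forall i, [disjoint A i & B i]) ->
  forall Gam : {set {set 'I_m + 'I_n} * {set 'I_m + 'I_n}},
    optimum_basis (Sigma' A B) Gam ->
    exists S : {set 'I_m},
      min_generator (Sigma A B) S /\
      Gam = Sigma'_main A B :|: [set (liftY m setT, liftX n S)].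
Proof.
move=> n1 m1 A0 B0 AB Gam opt.
exact: (main_result n1 m1 A0 B0 AB opt).
Qed.
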